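(* The estimate of $\Theta$ returned by the BAGUS algorithm (described in the context) is always symmetric, and it is also positive definite if the initial value $\Theta^{(0)}$ is positive definite.
   Context: BAGUS algorithm. Input: sample covariance $S=[s_{ij}]$ ($p\times p$), sample size $n$, hyperparameters $0<v_0<v_1$, $\eta\in(0,1)$, $\tau>0$, $B>0$, and an initial symmetric matrix $\Theta^{(0)}$ (the paper uses $\Theta^{(0)}=I$), with $W$ initialized as $W=(\Theta^{(0)})^{-1}$ (so $W=I$ when $\Theta^{(0)}=I$); throughout, $W$ is maintained equal to $\Theta^{-1}$. Repeat until convergence: (E-step) for all $i\ne j$ set $p_{ij}$ by $\log\frac{p_{ij}}{1-p_{ij}}=\log\frac{v_0}{v_1}+\log\frac{\eta}{1-\eta}-\frac{|\theta_{ij}|}{v_1}+\frac{|\theta_{ij}|}{v_0}$, using the current $\Theta$. (M-step) for $j=1,\dots,p$: partition $\Theta$ (and likewise $W,S,P=[p_{ij}]$) by moving row and column $j$ to the end: $\Theta_{11}$ is $\Theta$ with row and column $j$ deleted, $\theta_{12}$ is column $j$ without its $j$-th entry, $\theta_{22}=\theta_{jj}$, and similarly $W_{11},w_{12},w_{22}$, $s_{12},s_{22}$, $P_{12}$. Set $w_{22}\leftarrow s_{22}+\frac2n\tau$. Compute $\Theta_{11}^{-1}=W_{11}-w_{12}w_{12}^T/w_{22}$ (the inverse of the current $\Theta_{11}$). Update $\theta_{12}$ by cyclic coordinate descent: for each coordinate $k$, solve for $(\theta_{12})_k$ the equation $n s_{12}+nw_{22}\Theta_{11}^{-1}\theta_{12}+\big(\frac1{v_1}P_{12}+\frac1{v_0}(1-P_{12})\big)\odot\mathrm{sign}(\theta_{12})=0$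 in coordinate $k$ with the other coordinates fixed, repeating until convergence; if the resulting matrix has spectral norm exceeding $B$, keep the previous $\theta_{12}$ instead. Then set $\theta_{22}\leftarrow\frac1{w_{22}}+\theta_{12}^T\Theta_{11}^{-1}\theta_{12}$, place $\theta_{12}$ in both column $j$ and row $j$ of $\Theta$, and update $W_{11},w_{12}$ so that $W=\Theta^{-1}$ via $W_{11}=\Theta_{11}^{-1}+\frac{\Theta_{11}^{-1}\theta_{12}\theta_{12}^T\Theta_{11}^{-1}}{\theta_{22}-\theta_{12}^T\Theta_{11}^{-1}\theta_{12}}$, $w_{12}=-\frac{\Theta_{11}^{-1}\theta_{12}}{\theta_{22}-\theta_{12}^T\Theta_{11}^{-1}\theta_{12}}$. Output: $\Theta$ and $P$. Here $\odot$ is entrywise multiplication and $\mathrm{sign}$ is applied entrywise. *)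

(* Defs.v *)
From HB Require Import structures.
From mathcomp Require Import all_boot all_order all_algebra.
From mathcomp Require Import all_classical all_reals all_analysis.
Set Implicit Arguments. Unset Strict Implicit. Unset Printing Implicit Defensive.
Import Order.TTheory GRing.Theory Num.Theory.
Local Open Scope ring_scope.
Local Open Scope classical_set_scope.

Section BAGUS.
Variable R : realType.

Definition posdef (p : nat) (A : 'M[R]_p) : Prop :=
  A^T = A /\ forall x : 'cV[R]_p, x != 0 -> 0 < (x^T *m A *m x) 0 0.
Definition possemidef (p : nat) (A : 'M[R]_p) : Prop :=
  A^T = A /\ forall x : 'cV[R]_p, 0 <= (x^T *m A *m x) 0 0.

Definition specnorm (p : nat) (A : 'M[R]_p) : R :=
  sup [set r | exists x : 'cV[R]_p,
        (x^T *m x) 0 0 = 1 /\ r = Num.sqrt (((A *m x)^T *m (A *m x)) 0 0)].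

Definition sub11 (p : nat) (M : 'M[R]_p) (j : 'I_p) : 'M[R]_p.-1 :=
  \matrix_(a, b) M (lift j a) (lift j b).
Definition col12 (p : nat) (M : 'M[R]_p) (j : 'I_p) : 'cV[R]_p.-1 :=
  \col_a M (lift j a) j.

Definition ext_col (p : nat) (j : 'I_p) (t : 'cV[R]_p.-1) (i : 'I_p) : R :=
  if unlift j i is Some a then t a 0 else 0.
Definition assemble (p : nat) (M : 'M[R]_p) (j : 'I_p) (t : 'cV[R]_p.-1) (d : R)
  : 'M[R]_p :=
  \matrix_(a, b) if (a == j) && (b == j) then d
                 else if a == j then ext_col j t b
                 else if b == j then ext_col j t a
                 else M a b.

Definition estep (v0 v1 eta : R) (p : nat) (Th : 'M[R]_p) : 'M[R]_p :=
  \matrix_(i, j)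
    if i == j then 0
    else let L := ln (v0 / v1) + ln (eta / (1 - eta))
                  - `|Th i j| / v1 + `|Th i j| / v0 in
         1 / (1 + expR (- L)).

(* Exact solution in x of  a x + b + c sign(x) = 0  (with sign(0) read as
   the subdifferential [-1,1]): soft thresholding. *)
Definition soft_solve (a b c : R) : R :=
  - Num.sg b * Num.max (`|b| - c) 0 / a.

(* One coordinate-descent update of coordinate k of th for the equation
   n s12 + n w22 Ainv th + (P12/v1 + (1-P12)/v0) .* sign(th) = 0. *)
Definition cd_coord (nR w22 v0 v1 : R) (q : nat) (Ainv : 'M[R]_q)
    (s12 P12 : 'cV[R]_q) (th : 'cV[R]_q) (k : 'I_q) : 'cV[R]_q :=
  let a := nR * w22 * Ainv k k in
  let b := nR * s12 k 0 + nR * w22 * (\sum_(l < q | l != k) Ainv k l * th l 0) in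
  let c := P12 k 0 / v1 + (1 - P12 k 0) / v0 in
  \col_i (if i == k then soft_solve a b c else th i 0).

Definition cd_sweep (nR w22 v0 v1 : R) (q : nat) (Ainv : 'M[R]_q)
    (s12 P12 : 'cV[R]_q) (th : 'cV[R]_q) : 'cV[R]_q :=
  foldl (cd_coord nR w22 v0 v1 Ainv s12 P12) th (enum 'I_q).

(* The M-step update of column j, with m cyclic coordinate-descent sweeps
   ("repeating until convergence": m is the number of sweeps performed). *)
Definition col_update (n : nat) (v0 v1 tau B : R) (p : nat)
    (S P : 'M[R]_p) (m : nat) (Th : 'M[R]_p) (j : 'I_p) : 'M[R]_p :=
  let nR := n%:R in
  let w22 := S j j + 2 / nR * tau in
  let Ainv := invmx (sub11 Th j) in
  let th0 := col12 Th j in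
  let th1 := iter m (cd_sweep nR w22 v0 v1 Ainv (col12 S j) (col12 P j)) th0 in
  let diag (t : 'cV[R]_p.-1) := 1 / w22 + (t^T *m Ainv *m t) 0 0 in
  let cand := assemble Th j th1 (diag th1) in
  let th := if B < specnorm cand then th0 else th1 in
  assemble Th j th (diag th).

Definition mstep (n : nat) (v0 v1 tau B : R) (p : nat)
    (S P : 'M[R]_p) (ms : 'I_p -> nat) (Th : 'M[R]_p) : 'M[R]_p :=
  foldl (fun M j => col_update n v0 v1 tau B S P (ms j) M j) Th (enum 'I_p).

Fixpoint bagus (n : nat) (v0 v1 eta tau B : R) (p : nat) (S : 'M[R]_p)
    (nin : nat -> 'I_p -> nat) (Th0 : 'M[R]_p) (T : nat) : 'M[R]_p :=
  match T with
  | 0 => Th0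
  | T'.+1 =>
      let Th := bagus n v0 v1 eta tau B S nin Th0 T' in
      mstep n v0 v1 tau B S (estep v0 v1 eta Th) (nin T') Th
  end.
End BAGUS.

(* Main.v *)
Require Import Defs.
From HB Require Import structures.
From mathcomp Require Import all_boot all_order all_algebra.
From mathcomp Require Import all_classical all_reals all_analysis.
From mathcomp Require Import ring lra.
Import Order.TTheory GRing.Theory Num.Theory.
Local Open Scope ring_scope.
Set Implicit Arguments. Unset Strict Implicit. Unset Printing Implicit Defensive.
Section S.
Variable R : realType.

Definition rest p (j : 'I_p) (x : 'cV[R]_p) : 'cV[R]_p.-1 := \col_a x (lift j a) 0.

Lemma quad_sum p (M : 'M[R]_p) (x : 'cV[R]_p) :
  (x^T *m M *m x) 0 0 = \sum_i \sum_k x i 0 * M i k * x k 0.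
Proof.
rewrite mxE exchange_big /=; apply: eq_bigr => k _; rewrite !mxE big_distrl /=.
by apply: eq_bigr => i _ /=; rewrite !mxE.
Qed.

Lemma lin_sum p (t x : 'cV[R]_p) : (t^T *m x) 0 0 = \sum_i t i 0 * x i 0.
Proof. by rewrite mxE; apply: eq_bigr => i _ /=; rewrite !mxE. Qed.

Lemma sumD1 p (j : 'I_p) (F : 'I_p -> R) :
  \sum_i F i = F j + \sum_(i < p.-1) F (lift j i).
Proof. exact: (@bigD1_ord _ _ _ _ j xpredT). Qed.

Lemma quadE p (M : 'M[R]_p) (j : 'I_p) (x : 'cV[R]_p) : M^T = M ->
  (x^T *m M *m x) 0 0 = ((rest j x)^T *m sub11 M j *m rest j x) 0 0
    + 2 * x j 0 * ((col12 M j)^T *m rest j x) 0 0 + x j 0 ^+ 2 * M j j.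
Proof.
move=> HM.
have Ms : forall a b, M b a = M a b by move=> a b; rewrite -[in RHS]HM mxE.
rewrite !quad_sum lin_sum (sumD1 j) (sumD1 j).
under [X in _ + _ + X = _]eq_bigr => k _ do rewrite (sumD1 j).
rewrite big_split /=.
under [X in _ = X + _ + _]eq_bigr => k _ do under eq_bigr => i _ do rewrite !mxE.
under [X in _ = _ + _ * X + _]eq_bigr => k _ do rewrite !mxE.
have E1 : \sum_(i < p.-1) x j 0 * M j (lift j i) * x (lift j i) 0
   = x j 0 * \sum_(k < p.-1) M (lift j k) j * x (lift j k) 0.
  by rewrite big_distrr; apply: eq_bigr => i _ /=; rewrite (Ms (lift j i) j); ring.
have E2 : \sum_(i < p.-1) x (lift j i) 0 * M (lift j i) j * x j 0
   = x j 0 * \sum_(k < p.-1) M (lift j k) j * x (lift j k) 0.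
  by rewrite big_distrr; apply: eq_bigr => i _ /=; ring.
rewrite E1 E2.
set s1 := \sum_(k < p.-1) M (lift j k) j * x (lift j k) 0.
set s2 := \sum_(k < p.-1) _.
ring.
Qed.

Lemma assemble_tr p (M : 'M[R]_p) j t d : M^T = M ->
  (assemble M j t d)^T = assemble M j t d.
Proof.
move=> HM; apply/matrixP => a b; rewrite !mxE.
have -> : M b a = M a b by rewrite -[in RHS]HM mxE.
by case: (a == j); case: (b == j).
Qed.

Lemma assemble_sub11 p (M : 'M[R]_p) j t d : sub11 (assemble M j t d) j = sub11 M j.
Proof.
apply/matrixP => a b; rewrite !mxE.
have -> : (lift j a == j) = false by rewrite eq_sym (negbTE (neq_lift j a)).
have -> : (lift j b == j) = false by rewrite eq_sym (negbTE (neq_lift j b)).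
by [].
Qed.

Lemma assemble_col12 p (M : 'M[R]_p) j t d : col12 (assemble M j t d) j = t.
Proof.
apply/matrixP => a b; rewrite !mxE eqxx andbT.
have -> : (lift j a == j) = false by rewrite eq_sym (negbTE (neq_lift j a)).
by rewrite /ext_col liftK ord1.
Qed.

Lemma assemble_jj p (M : 'M[R]_p) j t d : assemble M j t d j j = d.
Proof. by rewrite mxE eqxx. Qed.

Definition ext p (j : 'I_p) (y : 'cV[R]_p.-1) : 'cV[R]_p := \col_i ext_col j y i.

Lemma rest_ext p (j : 'I_p) y : rest j (ext j y) = y.
Proof. by apply/matrixP => a b; rewrite !mxE /ext_col liftK ord1. Qed.

Lemma ext_j p (j : 'I_p) y : ext j y j 0 = 0.
Proof. by rewrite mxE /ext_col unlift_none. Qed.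

Lemma rest0 p (j : 'I_p) (x : 'cV[R]_p) : rest j x = 0 -> x j 0 = 0 -> x = 0.
Proof.
move=> H1 H2; apply/matrixP => i k; rewrite ord1 mxE.
case: (unliftP j i) => [a ->|->] //.
by have := congr1 (fun X : 'cV[R]_p.-1 => X a 0) H1; rewrite !mxE.
Qed.

Lemma sub11_tr p (M : 'M[R]_p) j : M^T = M -> (sub11 M j)^T = sub11 M j.
Proof. by move=> HM; apply/matrixP => a b; rewrite !mxE -[in RHS]HM mxE. Qed.

Lemma posdef_sub11 p (M : 'M[R]_p) j : posdef M -> posdef (sub11 M j).
Proof.
move=> [HM Hp]; split; first exact: sub11_tr.
move=> y y0.
have := Hp (ext j y).
rewrite (quadE j _ HM) rest_ext ext_j mulr0 mul0r expr0n /= mul0r !addr0; apply.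
by apply: contra y0 => /eqP e; rewrite -(rest_ext j y) e; apply/eqP/matrixP => a b; rewrite !mxE.
Qed.

Lemma posdef_ge0 p (A : 'M[R]_p) (x : 'cV[R]_p) : posdef A -> 0 <= (x^T *m A *m x) 0 0.
Proof.
move=> [_ Hp]; case: (eqVneq x 0) => [->|x0]; last exact/ltW/Hp.
by rewrite mulmx0 mxE.
Qed.

Lemma posdef_unit p (A : 'M[R]_p) : posdef A -> A \in unitmx.
Proof.
move=> [HA Hp]; rewrite -row_free_unit -kermx_eq0; apply/negPn/negP => K.
have [i Hi] : exists i, row i (kermx A) != 0.
  apply/existsP; apply: contraR K => /existsPn H; apply/eqP/row_matrixP => i.
  by rewrite row0; apply/eqP/negPn/H.
have Z : row i (kermx A) *m A = 0 by rewrite -row_mul mulmx_ker row0.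
have Hn : (row i (kermx A))^T != 0.
  by apply: contra Hi => /eqP e; rewrite -[row _ _]trmxK e trmx0.
by have := Hp _ Hn; rewrite trmxK Z mul0mx mxE ltxx.
Qed.

Lemma posdef_assemble p (M : 'M[R]_p) j (t : 'cV[R]_p.-1) (w : R) :
  posdef M -> 0 < w ->
  posdef (assemble M j t (1 / w + (t^T *m invmx (sub11 M j) *m t) 0 0)).
Proof.
move=> PM w0; have [HM _] := PM.
have PA := posdef_sub11 j PM.
have UA := posdef_unit PA.
have [HA _] := PA.
set A := sub11 M j in PA UA HA *.
set Ai := invmx A.
split; first exact: assemble_tr.
move=> x x0.
rewrite (quadE j _ (assemble_tr _ _ _ HM)) assemble_sub11 assemble_col12 assemble_jj -/A.
set y := rest j x; set z := x j 0.
set u := Ai *m t.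
have HAi : Ai^T = Ai by rewrite /Ai trmx_inv HA.
have uA : u^T *m A = t^T by rewrite trmx_mul HAi -mulmxA mulVmx // mulmx1.
have Au : A *m u = t by rewrite mulmxA mulmxV // mul1mx.
have yt : (y^T *m t) 0 0 = (t^T *m y) 0 0.
  by rewrite !lin_sum; apply: eq_bigr => i _; rewrite mulrC.
have key : ((y + z *: u)^T *m A *m (y + z *: u)) 0 0 =
   (y^T *m A *m y) 0 0 + 2 * z * (t^T *m y) 0 0 + z ^+ 2 * (t^T *m Ai *m t) 0 0.
  have -> : (y + z *: u)^T = y^T + z *: u^T by rewrite linearD /= linearZ.
  rewrite !mulmxDl !mulmxDr -!scalemxAl uA -!scalemxAr -!mulmxA Au.
  rewrite -/u !mxE.
  have -> : \sum_j0 y^T 0 j0 * t j0 0 = \sum_j0 t^T 0 j0 * y j0 0.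
    by apply: eq_bigr => i _; rewrite !mxE mulrC.
  ring.
have [z0|zn0] := eqVneq z 0.
  rewrite z0.
  have -> : forall a b c : R, a + 2 * 0 * b + 0 ^+ 2 * c = a by move=> a b c; ring.
  have [_ Hp] := PA; apply: Hp.
  by apply: contra x0 => /eqP e; apply/eqP; exact: rest0 e z0.
have -> : (y^T *m A *m y) 0 0 + 2 * z * (t^T *m y) 0 0 +
    z ^+ 2 * (1 / w + (t^T *m Ai *m t) 0 0) =
    ((y + z *: u)^T *m A *m (y + z *: u)) 0 0 + z ^+ 2 / w by rewrite key; ring.
apply: ltr_pwDr; first by rewrite divr_gt0 // exprn_even_gt0 //.
exact: posdef_ge0.
Qed.

Lemma psd_diag p (S : 'M[R]_p) j : possemidef S -> 0 <= S j j.
Proof.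
move=> [HS Hp]; have := Hp (\col_i ((i == j)%:R)).
rewrite (quadE j _ HS).
have -> : rest j (\col_i ((i == j)%:R)) = 0.
  by apply/matrixP => a b; rewrite !mxE eq_sym (negbTE (neq_lift j a)).
by rewrite !mulmx0 !mxE eqxx mulr0 !add0r expr1n mul1r.
Qed.

Lemma col_update_form n v0 v1 tau B p (S P Th : 'M[R]_p) m j :
  exists t, col_update n v0 v1 tau B S P m Th j =
    assemble Th j t (1 / (S j j + 2 / n%:R * tau) + (t^T *m invmx (sub11 Th j) *m t) 0 0).
Proof. by rewrite /col_update /=; case: ifP => _; eexists. Qed.

Lemma foldl_inv (T U : Type) (Q : T -> Prop) (f : T -> U -> T) (s : seq U) x :
  Q x -> (forall y u, Q y -> Q (f y u)) -> Q (foldl f x s).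
Proof. by elim: s x => //= u s IH x Qx H; apply: IH => //; apply: H. Qed.

Lemma mstep_inv (Q : forall p, 'M[R]_p -> Prop) n v0 v1 tau B p (S P : 'M[R]_p) ms Th :
  Q p Th -> (forall M j, Q p M -> Q p (col_update n v0 v1 tau B S P (ms j) M j)) ->
  Q p (mstep n v0 v1 tau B S P ms Th).
Proof. by move=> H0 H; apply: foldl_inv. Qed.
End S.

Unset Implicit Arguments.
Theorem theorem5 (R : realType) (p n : nat) (S : 'M[R]_p)
    (v0 v1 eta tau B : R) (Theta0 : 'M[R]_p)
    (nin : nat -> 'I_p -> nat) (T : nat) :
  (0 < n)%N -> possemidef S ->
  0 < v0 -> v0 < v1 -> 0 < eta -> eta < 1 -> 0 < tau -> 0 < B ->
  Theta0^T = Theta0 ->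
  (bagus n v0 v1 eta tau B S nin Theta0 T)^T = bagus n v0 v1 eta tau B S nin Theta0 T
  /\ (posdef Theta0 -> posdef (bagus n v0 v1 eta tau B S nin Theta0 T)).
Proof.
move=> n0 PS v00 v01 eta0 eta1 tau0 B0 HT0.
have w0 : forall j, 0 < S j j + 2 / n%:R * tau.
  move=> j; apply: ltr_wpDl (psd_diag j PS) _.
  by apply: mulr_gt0 => //; apply: divr_gt0 => //; rewrite ltr0n.
split.
  elim: T => //= T IH.
  apply: (mstep_inv (Q := fun p (M : 'M[R]_p) => M^T = M)) => // M j HM.
  have [t ->] := col_update_form n v0 v1 tau B S (estep v0 v1 eta (bagus n v0 v1 eta tau B S nin Theta0 T)) M (nin T j) j.
  exact: assemble_tr.
move=> P0; elim: T => //= T IH.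
apply: (mstep_inv (Q := fun p (M : 'M[R]_p) => posdef M)) => // M j PM.
have [t ->] := col_update_form n v0 v1 tau B S (estep v0 v1 eta (bagus n v0 v1 eta tau B S nin Theta0 T)) M (nin T j) j.
exact: posdef_assemble.
Qed.
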